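(* Let $T$ be a string of length $n$ and $1\le i\le j<n$. For any interval $[s,t]$ with $i\le s<t\le j$, we have $[s,t]\in\mathsf{MUS}(T[i..j])$ and $[s,t]\notin\mathsf{MUS}(T[i..j+1])$ if and only if $T[s..t]=\mathit{sqs}_{i,j+1}$ (as strings) and $\#\mathit{occ}_{T[i..j+1]}(\mathit{sqs}_{i,j+1})=2$.
   Context: $T[a..b]$ denotes the substring of $T$ from position $a$ to $b$. For strings $S,w$, $\#\mathit{occ}_S(w)$ is the number of positions at which $w$ occurs in $S$, with $\#\mathit{occ}_S(\varepsilon)=|S|+1$. A substring $w$ of $S$ is unique in $S$ if $\#\mathit{occ}_S(w)=1$ and repeating if $\#\mathit{occ}_S(w)\ge 2$. For $1\le i\le j\le n$, $\mathsf{MUS}(T[i..j])$ is the set of intervals $[s,t]$ (positions in $T$) with $i\le s\le t\le j$ such that $T[s..t]$ is unique in $T[i..j]$ and every proper substring of $T[s..t]$ (including the empty string) is repeating in $T[i..j]$. $\mathit{sqs}_{i,j}$ is the shortest suffix of $T[i..j]$ that occurs at most twice in $T[i..j]$. *)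

(* Defs.v *)
From mathcomp Require Import all_boot.
Set Implicit Arguments. Unset Strict Implicit. Unset Printing Implicit Defensive.

(* T[a..b] with 1-based positions: the substring from position a to b. *)
Definition substr (A : eqType) (T : seq A) (a b : nat) : seq A :=
  take (b.+1 - a) (drop a.-1 T).

(* #occ_S(w): number of positions at which w occurs in S; #occ_S(eps) = |S|+1. *)
Definition occ (A : eqType) (S w : seq A) : nat :=
  count (fun p => take (size w) (drop p S) == w) (iota 0 (size S - size w).+1).

Definition unique_in (A : eqType) (S w : seq A) : bool := occ S w == 1.
Definition repeating_in (A : eqType) (S w : seq A) : bool := 1 < occ S w.

Definition inMUS (A : eqType) (T : seq A) (i j s t : nat) : Prop :=
  [/\ i <= s, s <= t, t <= j,
      unique_in (substr T i j) (substr T s t) &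
      forall w : seq A, infix w (substr T s t) -> size w < size (substr T s t) ->
        repeating_in (substr T i j) w].

Definition shortest_suffix_le2 (A : eqType) (S : seq A) : seq A :=
  let k := find (fun k => occ S (drop (size S - k) S) <= 2) (iota 0 (size S).+1) in
  drop (size S - k) S.

Definition sqs (A : eqType) (T : seq A) (i j : nat) : seq A :=
  shortest_suffix_le2 (substr T i j).

(* Main.v *)
Require Import Defs.
From mathcomp Require Import all_boot zify.
Set Implicit Arguments. Unset Strict Implicit. Unset Printing Implicit Defensive.

Definition occAt (A : eqType) (S w : seq A) q := take (size w) (drop q S) == w.

Lemma occ_rcons (A : eqType) (S w : seq A) c :
  occ (rcons S c) w = occ S w + suffix w (rcons S c).
Proof.
rewrite /occ suffixE size_rcons.
case: (ltnP (size S) (size w)) => H.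
  have -> : size S - size w = 0 by lia.
  have -> : (size S).+1 - size w = 0 by lia.
  rewrite /= drop0 !addn0 take_oversize; last by rewrite size_rcons.
  rewrite drop0; have -> : (take (size w) S == w) = false.
    apply/negbTE/eqP => E; have := size_take (size w) S; rewrite E; case: ltnP; lia.
  by [].
have -> : ((size S).+1 - size w).+1 = (size S - size w).+1 + 1 by lia.
rewrite iotaD count_cat.
congr (_ + _).
  apply: eq_in_count => q; rewrite mem_iota add0n => /andP[_ Hq].
  rewrite -cats1 drop_cat; case: ltnP => Hq2.
    rewrite take_cat size_drop; case: ltnP => //= Hw.
    have -> : size w = size S - q by lia.
    by rewrite subnn take0 cats0 take_oversize // size_drop.
  have w0 : size w = 0 by lia.
  by rewrite w0 !take0.
rewrite /= addn0 add0n take_oversize; last by rewrite size_drop size_rcons; lia.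
by have -> : (size S - size w).+1 = (size S).+1 - size w by lia.
Qed.

Lemma occ_two (A : eqType) (S w : seq A) q1 q2 :
  q1 != q2 -> q1 + size w <= size S -> q2 + size w <= size S ->
  occAt S w q1 -> occAt S w q2 -> 1 < occ S w.
Proof.
move=> ne h1 h2 o1 o2; rewrite /occ -size_filter.
have : size [:: q1; q2] <= size (filter (fun p => take (size w) (drop p S) == w)
   (iota 0 (size S - size w).+1)).
  apply: uniq_leq_size; first by rewrite /= inE ne.
  move=> x; rewrite !inE => /orP[] /eqP ->;
  rewrite mem_filter mem_iota //=; apply/andP; split => //; lia.
by [].
Qed.

Definition PP (A : eqType) (X : seq A) := fun k => occ X (drop (size X - k) X) <= 2.

Lemma ssl2_find (A : eqType) (X : seq A) :
  let k := find (PP X) (iota 0 (size X).+1) in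
  [/\ k <= size X, shortest_suffix_le2 X = drop (size X - k) X &
      forall m, m < k -> 2 < occ X (drop (size X - m) X)].
Proof.
move=> k.
have hk : k < (size X).+1.
  rewrite -(size_iota 0 (size X).+1) -has_find; apply/hasP; exists (size X).
    rewrite mem_iota; lia.
  by rewrite /PP subnn drop0 /occ subnn; rewrite /= drop0 take_size eqxx.
split => //.
move=> m hm; have := before_find 0 hm; rewrite nth_iota; last by lia.
rewrite /PP add0n => /negbT; rewrite -ltnNge; done.
Qed.

Lemma ssl2_eq (A : eqType) (X : seq A) k :
  k <= size X -> occ X (drop (size X - k) X) <= 2 ->
  (forall m, m < k -> 2 < occ X (drop (size X - m) X)) ->
  shortest_suffix_le2 X = drop (size X - k) X.
Proof.
move=> h1 h2 h3; have [_ -> h4] := ssl2_find X.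
set f := find _ _ in h4 *.
have : f = k.
  case: (ltngtP f k) => // H.
  - have := h3 _ H.
    have hh : has (PP X) (iota 0 (size X).+1) by rewrite has_find size_iota; lia.
    have := nth_find 0 hh; rewrite -/f nth_iota; last by lia.
    by rewrite /PP add0n; lia.
  - by have := h4 _ H; lia.
by move=> ->.
Qed.

Definition MUSp (A : eqType) (X u : seq A) :=
  unique_in X u /\ forall w, infix w u -> size w < size u -> repeating_in X w.

Lemma abstr (A : eqType) (S : seq A) c p L : 0 < L -> p + L <= size S ->
  (MUSp S (take L (drop p S)) /\ ~ MUSp (rcons S c) (take L (drop p S))) <->
  (take L (drop p S) = shortest_suffix_le2 (rcons S c) /\
   occ (rcons S c) (shortest_suffix_le2 (rcons S c)) = 2).
Proof.
move=> L0 hpL.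
set u := take L (drop p S); set S' := rcons S c.
have su : size u = L by rewrite size_takel // size_drop; lia.
have sS' : size S' = (size S).+1 by rewrite size_rcons.
have mono : forall w, occ S w <= occ S' w by move=> w; rewrite /S' occ_rcons; lia.
split.
  move=> [[U R] N].
  have suf : suffix u S' /\ occ S' u = 2.
    move: U; rewrite /unique_in => /eqP U.
    case E : (suffix u S'); first by split => //; rewrite /S' occ_rcons U -/S' E.
    exfalso; apply: N; split.
      by rewrite /unique_in /S' occ_rcons U -/S' E.
    move=> w hw hs; have := R w hw hs; rewrite /repeating_in; have := mono w; lia.
  case: suf => suf o2.
  have eu : u = drop (size S' - L) S' by move: suf; rewrite suffixE su => /eqP.
  have -> : shortest_suffix_le2 S' = u.
    rewrite eu; apply: ssl2_eq; [lia | by rewrite -eu o2 |].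
    move=> m hm.
    have ev : drop (size S' - m) S' = drop (L - m) u.
      by rewrite eu drop_drop; congr drop; lia.
    have := R (drop (L - m) u) (infix_drop _ _); rewrite size_drop su.
    rewrite /repeating_in -ev /S' occ_rcons -/S' ev.
    have -> : suffix (drop (L - m) u) S'.
      by rewrite -ev suffix_drop.
    move=> H; have := H ltac:(lia); lia.
  by [].
move=> [Hu Ho].
have [hk Hs Hb] := ssl2_find S'.
set k := find _ _ in hk Hs Hb.
rewrite -Hu in Ho Hs.
have suf : suffix u S' by rewrite Hs suffix_drop.
have sk : size u = k by rewrite Hs size_drop; lia.
have o1 : occ S u = 1 by move: Ho; rewrite /S' occ_rcons -/S' suf; lia.
split; last by case; rewrite /unique_in Ho.
split; first by rewrite /unique_in o1.
move=> w hw hs.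
case sw : (suffix w u).
  have ew0 : drop (size u - size w) u = w by apply/eqP; rewrite -suffixE.
  have ew : w = drop (size S' - size w) S'.
    by rewrite -{1}ew0 sk Hs drop_drop; congr drop; lia.
  have := Hb (size w) ltac:(lia); rewrite -ew /S' occ_rcons -/S'.
  rewrite /repeating_in; case: (suffix w S') => /=; lia.
move/infixP: hw => [a [b eu]].
case/lastP: b eu => [|b' x] eu.
  by move: sw; rewrite eu cats0 suffix_suffix.
apply: (@occ_two _ S w (p + size a) (size S' - L + size a)).
- rewrite -(eqn_add2r (size a)) /=; apply/eqP => E; lia.
- have := congr1 size eu; rewrite !size_cat size_rcons; lia.
- have := congr1 size eu; rewrite !size_cat size_rcons; lia.
- rewrite /occAt addnC -drop_drop -(cat_take_drop L (drop p S)) -/u eu -!catA.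
  by rewrite drop_size_cat // take_size_cat.
- have ed : drop (size S' - L) S' = u by apply/eqP; rewrite -su -suffixE.
  set pre := take (size S' - L) S'.
  have spre : size pre = size S' - L by rewrite size_takel //; lia.
  have eS : rcons S c = rcons (pre ++ a ++ w ++ b') x.
    by rewrite -/S' -{1}(cat_take_drop (size S' - L) S') ed eu !rcons_cat.
  have eS3 : S = pre ++ a ++ w ++ b' by case: (rcons_inj eS).
  rewrite /occAt {1}eS3 catA drop_size_cat; last by rewrite size_cat spre.
  by rewrite take_size_cat.
Qed.

Theorem lemma3 (A : eqType) (T : seq A) (i j : nat) :
  1 <= i -> i <= j -> j < size T ->
  forall s t : nat, i <= s -> s < t -> t <= j ->
  (inMUS T i j s t /\ ~ inMUS T i j.+1 s t) <->
  (substr T s t = sqs T i j.+1 /\ occ (substr T i j.+1) (sqs T i j.+1) = 2).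
Proof.
move=> hi hij hj s t his hst htj.
case: T hj => [//|x0 T'] hj; set T := x0 :: T' in hj *.
have [c ec] : exists c, substr T i j.+1 = rcons (substr T i j) c.
  exists (nth x0 (drop i.-1 T) (j.+1 - i)).
  rewrite /substr -take_nth; last by rewrite size_drop; lia.
  congr take; lia.
have eu : substr T s t = take (t.+1 - s) (drop (s - i) (substr T i j)).
  rewrite /substr [RHS]take_drop take_takel; last by lia.
  rewrite -take_drop drop_drop; congr (take _ (drop _ _)); lia.
have ssz : size (substr T i j) = j.+1 - i by rewrite /substr size_takel // size_drop; lia.
have E1 : forall k, s <= t -> t <= k -> inMUS T i k s t <-> MUSp (substr T i k) (substr T s t).
  move=> k h1 h2; rewrite /inMUS /MUSp; split.
    by case.
  by case=> U R; split.
move: (E1 j (ltnW hst) htj) (E1 j.+1 (ltnW hst) (leqW htj)) => H1 H2.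
have := @abstr A (substr T i j) c (s - i) (t.+1 - s) ltac:(lia) ltac:(lia).
rewrite /sqs ec -eu -ec; tauto.
Qed.
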